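(* Let $a>0$, $b\ge0$, $\eta>0$, $\alpha>0$. Let $(r_t)_{t\ge0}$ be real numbers with $r_{t+1}\le r_t-\alpha\frac a2r_t^2+\alpha\frac b\eta$, define $\rho_0=r_0$, $\rho_{t+1}=\rho_t-\alpha\frac a2\rho_t^2+\alpha\frac b\eta$, let $\bar\rho=\sqrt{\frac{2b}{\eta a}}$, and define $\nu_0=\rho_0$, $\nu_{t+1}=\big(1-\alpha\frac a2\bar\rho\big)\nu_t+\alpha\frac b\eta$ for $t\ge0$. If $r_0\ge\bar\rho$ and $\alpha\le\frac{1}{a\,r_0}$, then $\nu_t\ge\rho_t$ for all $t\ge0$. *)

(* Defs.v *)
From Stdlib Require Import Reals.
Open Scope R_scope.

Fixpoint rho_seq (a b eta alpha r0 : R) (t : nat) : R :=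
  match t with
  | O => r0
  | S t' => let p := rho_seq a b eta alpha r0 t' in
            p - alpha * (a / 2) * p ^ 2 + alpha * (b / eta)
  end.

Definition rho_bar (a b eta : R) : R := sqrt (2 * b / (eta * a)).

Fixpoint nu_seq (a b eta alpha r0 : R) (t : nat) : R :=
  match t with
  | O => r0
  | S t' => (1 - alpha * (a / 2) * rho_bar a b eta) * nu_seq a b eta alpha r0 t'
            + alpha * (b / eta)
  end.

(* Main.v *)
Require Import Defs.
From Stdlib Require Import Reals Lra Psatz.
Open Scope R_scope.

Theorem lemmaC9 (a b eta alpha : R) (r : nat -> R)
  (ha : 0 < a) (hb : 0 <= b) (heta : 0 < eta) (halpha : 0 < alpha)
  (hr : forall t : nat,
      r (S t) <= r t - alpha * (a / 2) * (r t) ^ 2 + alpha * (b / eta))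
  (hr0 : rho_bar a b eta <= r 0%nat)
  (hstep : alpha <= 1 / (a * r 0%nat)) :
  forall t : nat, rho_seq a b eta alpha (r 0%nat) t <= nu_seq a b eta alpha (r 0%nat) t.
Proof.
  set (r0 := (r 0%nat)) in *.
  set (s := rho_bar a b eta) in *.
  assert (hs0 : 0 <= s) by (unfold s, rho_bar; apply sqrt_pos).
  assert (hs2 : s * s = 2 * b / (eta * a)).
  { unfold s, rho_bar. apply sqrt_sqrt. apply Rmult_le_pos; [lra|].
    apply Rlt_le, Rinv_0_lt_compat, Rmult_lt_0_compat; lra. }
  assert (hr0pos : 0 < r0).
  { destruct (Req_dec r0 0) as [E|E].
    - rewrite E, Rmult_0_r in hstep. unfold Rdiv in hstep. rewrite Rinv_0 in hstep. lra.
    - lra. }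
  assert (hq : alpha * a * r0 <= 1).
  { assert (0 < a * r0) by (apply Rmult_lt_0_compat; lra).
    apply Rmult_le_compat_r with (r := a * r0) in hstep; [|lra].
    unfold Rdiv in hstep. rewrite Rmult_1_l, Rinv_l in hstep by lra. lra. }
  assert (hd : alpha * (b / eta) = alpha * (a / 2) * (s * s)).
  { rewrite hs2. field. lra. }
  set (c := alpha * (a / 2)) in *.
  assert (hc : 0 < c) by (unfold c; nra).
  assert (hcr : 2 * c * r0 <= 1) by (unfold c; lra).
  assert (H : forall t, s <= rho_seq a b eta alpha r0 t <= r0 /\
                 rho_seq a b eta alpha r0 t <= nu_seq a b eta alpha r0 t).
  { induction t as [|t IH]; simpl.
    - lra.
    - fold c. fold s. rewrite hd.
      set (p := rho_seq a b eta alpha r0 t) in *.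
      set (v := nu_seq a b eta alpha r0 t) in *.
      destruct IH as [[H1 H2] H3].
      assert (hcs : c * s <= 1/2) by nra.
      assert (hcp : c * (p + s) <= 1) by nra.
      split; [split|].
      + assert (p - c * p ^ 2 + c * (s * s) - s = (p - s) * (1 - c * (p + s))) by ring.
        nra.
      + assert (0 <= c * ((p - s) * (p + s))) by (apply Rmult_le_pos; nra). nra.
      + assert ((1 - c * s) * v + c * (s * s) - (p - c * p ^ 2 + c * (s * s))
                = (1 - c * s) * (v - p) + c * p * (p - s)) by ring.
        assert (0 <= c * p) by nra.
        nra. }
  intro t. apply H.
Qed.
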